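(* Let $K$ be a valued field and $d,r\ge1$. Then any finite set $X\subseteq K^d$ with $|X|\ge(d+1)(r-1)+1$ can be partitioned into sets $X_1,\dots,X_r$ with $|X_i|=d+1$ for $i<r$, $|X_r|=|X|-(d+1)(r-1)$, and $\operatorname{conv}(X_i)\supseteq\operatorname{conv}(X_j)$ for all $1\le i\le j\le r$. In particular $\bigcap_{i=1}^r\operatorname{conv}(X_i)\supseteq X_r\ne\emptyset$.
   Context: $K$ is a field with valuation $\nu$ and valuation ring $\mathcal{O}=\{x:\nu(x)\ge0\}$. For $Y\subseteq K^d$, $\operatorname{conv}(Y)=\{\sum_{i=1}^n\alpha_iy_i: n\ge1,y_i\in Y,\alpha_i\in\mathcal{O},\sum_i\alpha_i=1\}$. *)

(* Defs.v *)
From HB Require Import structures.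
From mathcomp Require Import all_boot all_order all_algebra.
From mathcomp Require Export finmap.
Set Implicit Arguments. Unset Strict Implicit. Unset Printing Implicit Defensive.
Import Order.TTheory GRing.Theory.
Local Open Scope ring_scope.

(* Values of a valuation: an element of the value group G, or None = +infinity. *)
Definition vle (G : zmodType) (le : rel G) (a b : option G) : bool :=
  match a, b with
  | _, None => true
  | None, Some _ => false
  | Some x, Some y => le x y
  end.

Definition vadd (G : zmodType) (a b : option G) : option G :=
  match a, b with
  | Some x, Some y => Some (x + y)
  | _, _ => None
  end.

Definition ordered_abelian_group (G : zmodType) (le : rel G) : Prop :=
  [/\ reflexive le, antisymmetric le, transitive le, total le
    & forall a b c : G, le a b -> le (a + c) (b + c)].

Definition is_valuation (K : fieldType) (G : zmodType) (le : rel G)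
    (nu : K -> option G) : Prop :=
  [/\ ordered_abelian_group le,
      (forall x : K, nu x = None <-> x = 0),
      (forall x y : K, nu (x * y) = vadd (nu x) (nu y))
    & (forall x y : K, vle le (nu x) (nu (x + y)) || vle le (nu y) (nu (x + y)))].

Definition val_ring (K : fieldType) (G : zmodType) (le : rel G)
    (nu : K -> option G) (x : K) : bool := vle le (Some 0) (nu x).

Definition vconv (K : fieldType) (G : zmodType) (le : rel G)
    (nu : K -> option G) (d : nat) (Y : 'rV[K]_d -> Prop) (p : 'rV[K]_d) : Prop :=
  exists (n : nat) (y : 'I_n -> 'rV[K]_d) (alpha : 'I_n -> K),
    [/\ (0 < n)%N, (forall i, Y (y i)), (forall i, val_ring le nu (alpha i)),
        \sum_(i < n) alpha i = 1
      & p = \sum_(i < n) alpha i *: y i].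

(* Main.v *)
Require Import Defs.
From mathcomp Require Import all_boot all_order all_algebra finmap zify.
Set Implicit Arguments. Unset Strict Implicit. Unset Printing Implicit Defensive.
Import Order.TTheory GRing.Theory.
Local Open Scope ring_scope.


Lemma vle_trans (G : zmodType) (le : rel G) : transitive le -> transitive (vle le).
Proof. move=> tr [b|] [a|] [c|] //=; exact: tr. Qed.

Lemma vle_total (G : zmodType) (le : rel G) : total le -> total (vle le).
Proof. move=> to [a|] [b|] //=. Qed.

Lemma oag_0 (G : zmodType) (le : rel G) (g : G) : ordered_abelian_group le ->
  g + g = 0 -> g = 0.
Proof.
case=> rf an tr to tA Hg.
case/orP: (to 0 g) => H.
- have := tA _ _ g H; rewrite add0r Hg => H'. by apply: an; rewrite H H'.
- have := tA _ _ g H; rewrite add0r Hg => H'. by apply: an; rewrite H H'.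
Qed.


Lemma nu1 K G le nu : @is_valuation K G le nu -> nu 1 = Some 0.
Proof.
case=> og Hz Hm _.
case E: (nu 1) => [g|]; last by have := (proj1 (Hz 1) E); move/eqP; rewrite oner_eq0.
have := Hm 1 1; rewrite mulr1 E /= => [[]] H.
by congr Some; apply: (@addrI _ g); rewrite addr0 -H.
Qed.

Lemma vr1 K G le nu : @is_valuation K G le nu -> val_ring le nu 1.
Proof. move=> Hv; rewrite /val_ring (nu1 Hv) /=; by case: Hv => [[]]. Qed.

Lemma vrM K G le nu : @is_valuation K G le nu -> forall x y,
  val_ring le nu x -> val_ring le nu y -> val_ring le nu (x * y).
Proof.
move=> Hv x y; case: (Hv) => [[rf an tr to tA] _ Hm _].
rewrite /val_ring Hm; case: (nu x) => [a|] //; case: (nu y) => [b|] //= Ha Hb.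
apply: tr (Hb) _; have := tA _ _ b Ha; by rewrite add0r.
Qed.

Lemma vrD K G le nu : @is_valuation K G le nu -> forall x y,
  val_ring le nu x -> val_ring le nu y -> val_ring le nu (x + y).
Proof.
move=> Hv x y; case: (Hv) => [[rf an tr to tA] _ _ Hu].
rewrite /val_ring => Hx Hy; case/orP: (Hu x y) => H.
- exact: vle_trans tr _ _ _ Hx H.
- exact: vle_trans tr _ _ _ Hy H.
Qed.

Lemma nuN1 K G le nu : @is_valuation K G le nu -> nu (-1) = Some 0.
Proof.
move=> Hv; case: (Hv) => og Hz Hm _.
case E: (nu (-1)) => [g|]; last first.
  by have := (proj1 (Hz (-1)) E); move/eqP; rewrite oppr_eq0 oner_eq0.
have := Hm (-1) (-1); rewrite mulrNN mulr1 E (nu1 Hv) /= => [[]] H.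
by rewrite (oag_0 og (esym H)).
Qed.

Lemma vrN K G le nu : @is_valuation K G le nu -> forall x,
  val_ring le nu x -> val_ring le nu (- x).
Proof.
move=> Hv x Hx; rewrite -mulN1r; apply: vrM => //.
rewrite /val_ring (nuN1 Hv) /=; by case: Hv => [[]].
Qed.

Lemma vr0 K G le nu : @is_valuation K G le nu -> val_ring le nu 0.
Proof. move=> Hv; rewrite /val_ring; case: Hv => _ Hz _ _; by rewrite (proj2 (Hz 0) erefl). Qed.

Lemma vr_div K G le nu : @is_valuation K G le nu -> forall a b : K, b != 0 ->
  vle le (nu b) (nu a) -> val_ring le nu (a / b).
Proof.
move=> Hv a b nb Hab; case: (Hv) => [[rf an tr to tA] Hz Hm _].
have Ea : a = (a / b) * b by rewrite divfK.
have Ea' : nu a = vadd (nu (a / b)) (nu b) by rewrite -Hm -Ea.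
move: Hab; rewrite Ea' /val_ring.
case Eb: (nu b) => [y|]; last by move: (proj1 (Hz b) Eb) => /eqP; rewrite (negbTE nb).
case: (nu (a / b)) => [z|] //= H.
have := tA _ _ (- y) H; by rewrite addrN addrK.
Qed.

Definition sumv (K : fieldType) (V : lmodType K) (cs : seq (K * V)) : V :=
  \sum_(pr <- cs) pr.1 *: pr.2.
Definition sumc (K : fieldType) (V : lmodType K) (cs : seq (K * V)) : K :=
  \sum_(pr <- cs) pr.1.
Definition ocomb (K : fieldType) (G : zmodType) (le : rel G) (nu : K -> option G)
  (V : lmodType K) (S : V -> Prop) (cs : seq (K * V)) : Prop :=
  forall pr, pr \in cs -> val_ring le nu pr.1 /\ S pr.2.

Definition scl (K : fieldType) (V : lmodType K) (a : K) (cs : seq (K * V)) :=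
  [seq (a * pr.1, pr.2) | pr <- cs].

Lemma sumv_scl (K : fieldType) (V : lmodType K) a (cs : seq (K * V)) :
  sumv (scl a cs) = a *: sumv cs.
Proof. rewrite /sumv /scl big_map scaler_sumr; apply: eq_bigr => pr _ /=; by rewrite scalerA. Qed.

Lemma sumc_scl (K : fieldType) (V : lmodType K) a (cs : seq (K * V)) :
  sumc (scl a cs) = a * sumc cs.
Proof. by rewrite /sumc /scl big_map mulr_sumr. Qed.

Lemma sumv_cat (K : fieldType) (V : lmodType K) (cs ds : seq (K * V)) :
  sumv (cs ++ ds) = sumv cs + sumv ds.
Proof. by rewrite /sumv big_cat. Qed.

Lemma sumc_cat (K : fieldType) (V : lmodType K) (cs ds : seq (K * V)) :
  sumc (cs ++ ds) = sumc cs + sumc ds.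
Proof. by rewrite /sumc big_cat. Qed.

Lemma sumv_cons (K : fieldType) (V : lmodType K) pr (cs : seq (K * V)) :
  sumv (pr :: cs) = pr.1 *: pr.2 + sumv cs.
Proof. by rewrite /sumv big_cons. Qed.

Lemma sumc_cons (K : fieldType) (V : lmodType K) pr (cs : seq (K * V)) :
  sumc (pr :: cs) = pr.1 + sumc cs.
Proof. by rewrite /sumc big_cons. Qed.

Lemma sumv_nil (K : fieldType) (V : lmodType K) : sumv ([::] : seq (K * V)) = 0.
Proof. by rewrite /sumv big_nil. Qed.

Lemma sumc_nil (K : fieldType) (V : lmodType K) : sumc ([::] : seq (K * V)) = 0.
Proof. by rewrite /sumc big_nil. Qed.

Lemma ocomb_cat (K : fieldType) (G : zmodType) le nu (V : lmodType K) (S : V -> Prop) cs ds :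
  @ocomb K G le nu V S cs -> ocomb le nu S ds -> ocomb le nu S (cs ++ ds).
Proof. by move=> H1 H2 pr; rewrite mem_cat => /orP [/H1|/H2]. Qed.

Lemma ocomb_scl (K : fieldType) (G : zmodType) le nu (V : lmodType K) (S : V -> Prop) a cs :
  is_valuation le nu -> val_ring le nu a ->
  @ocomb K G le nu V S cs -> ocomb le nu S (scl a cs).
Proof.
move=> Hv Ha H pr /mapP [q /H [H1 H2] ->] /=; split => //; exact: vrM.
Qed.

Lemma ocomb_nil (K : fieldType) (G : zmodType) le nu (V : lmodType K) (S : V -> Prop) :
  @ocomb K G le nu V S [::].
Proof. by []. Qed.

Lemma ocomb_mono (K : fieldType) (G : zmodType) le nu (V : lmodType K) (S S' : V -> Prop) cs :
  (forall x, S x -> S' x) -> @ocomb K G le nu V S cs -> ocomb le nu S' cs.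
Proof. by move=> HS H pr /H [? /HS]. Qed.

Lemma subst_aff (K : fieldType) (G : zmodType) le nu (V : lmodType K) (S Y : V -> Prop) cs :
  is_valuation le nu ->
  (forall y, Y y -> exists ds, ocomb le nu S ds /\ sumv ds = y /\ sumc ds = 1) ->
  @ocomb K G le nu V Y cs ->
  exists ds, ocomb le nu S ds /\ sumv ds = sumv cs /\ sumc ds = sumc cs.
Proof.
move=> Hv HY; elim: cs => [|pr cs IH] Hc.
  by exists [::]; split => //; exact: ocomb_nil.
have [Ha Hy] := Hc pr (mem_head _ _).
have [es [He1 [He2 He3]]] := IH (fun q Hq => Hc q (mem_behead (s:=pr::cs) Hq)).
have [ds [Hd1 [Hd2 Hd3]]] := HY _ Hy.
exists (scl pr.1 ds ++ es); split; [|split].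
- apply: ocomb_cat => //; exact: ocomb_scl.
- by rewrite sumv_cat sumv_scl sumv_cons Hd2 He2.
- by rewrite sumc_cat sumc_scl sumc_cons Hd3 He3 mulr1.
Qed.

Lemma subst_lin (K : fieldType) (G : zmodType) le nu (V : lmodType K) (S Y : V -> Prop) cs :
  is_valuation le nu ->
  (forall y, Y y -> exists ds, ocomb le nu S ds /\ sumv ds = y) ->
  @ocomb K G le nu V Y cs ->
  exists ds, ocomb le nu S ds /\ sumv ds = sumv cs.
Proof.
move=> Hv HY; elim: cs => [|pr cs IH] Hc.
  by exists [::]; split => //; exact: ocomb_nil.
have [Ha Hy] := Hc pr (mem_head _ _).
have [es [He1 He2]] := IH (fun q Hq => Hc q (mem_behead (s:=pr::cs) Hq)).
have [ds [Hd1 Hd2]] := HY _ Hy.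
exists (scl pr.1 ds ++ es); split.
- apply: ocomb_cat => //; exact: ocomb_scl.
- by rewrite sumv_cat sumv_scl sumv_cons Hd2 He2.
Qed.

Lemma exmin (G : zmodType) (le : rel G) (I : eqType) (g : I -> option G) (s : seq I) :
  ordered_abelian_group le -> s != [::] ->
  exists2 p, p \in s & forall j, j \in s -> vle le (g p) (g j).
Proof.
case=> rf an tr to _; elim: s => [|x s IH] // _.
case: (altP (s =P [::])) => [->|ns].
  exists x; first exact: mem_head.
  move=> j; rewrite inE => /eqP ->; case: (g x) => //.
have [p Hp Hm] := IH ns.
case/orP: (vle_total to (g x) (g p)) => H.
- exists x; first exact: mem_head.
  move=> j; rewrite inE => /orP [/eqP ->|/Hm Hj]; first by case: (g x).
  exact: vle_trans tr _ _ _ H Hj.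
- exists p; first by rewrite inE Hp orbT.
  move=> j; rewrite inE => /orP [/eqP ->|/Hm //]; done.
Qed.

Lemma core (K : fieldType) (G : zmodType) (le : rel G) (nu : K -> option G)
  (d : nat) (I : eqType) (n : nat) :
  is_valuation le nu ->
  forall (C : {set 'I_d}) (f : I -> 'rV[K]_d) (s : seq I),
  (#|C| <= n)%N -> (forall i, i \in s -> forall c, c \notin C -> f i ord0 c = 0) ->
  exists T : seq I, [/\ (size T <= n)%N, {subset T <= s} &
     forall i, i \in s -> exists ds, ocomb le nu (fun v => v \in map f T) ds /\ sumv ds = f i].
Proof.
move=> Hv; elim: n => [|n IH] C f s HC Hs.
  exists [::]; split => // i Hi; exists [::]; split => //.
  rewrite sumv_nil; apply/rowP => j; rewrite !mxE Hs //.
  by move: HC; rewrite leqn0 cards_eq0 => /eqP ->; rewrite inE.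
case: (set_0Vmem C) => [C0|[c cC]].
  exists [::]; split => // i Hi; exists [::]; split => //.
  rewrite sumv_nil; apply/rowP => j; rewrite !mxE Hs //.
  by rewrite C0 inE.
have HC' : (#|C :\ c| <= n)%N by move: HC; rewrite (cardsD1 c C) cC.
pose a i := f i ord0 c.
have allz : (forall i, i \in s -> a i = 0) ->
   exists T : seq I, [/\ (size T <= n.+1)%N, {subset T <= s} &
     forall i, i \in s -> exists ds, ocomb le nu (fun v => v \in map f T) ds /\ sumv ds = f i].
  move=> Hz.
  have Hs' : forall i, i \in s -> forall c', c' \notin C :\ c -> f i ord0 c' = 0.
    move=> i Hi c'; rewrite !inE negb_and negbK => /orP [/eqP ->|]; first exact: Hz.
    exact: Hs.
  have [T [H1 H2 H3]] := IH (C :\ c) f s HC' Hs'.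
  exists T; split => //; exact: leqW.
case: (altP (s =P [::])) => [s0|ns].
  by apply: allz => i; rewrite s0.
case: (Hv) => og Hz0 Hm Hu.
have [p Hp Hmin] := exmin (fun i => nu (a i)) og ns.
case: (altP (a p =P 0)) => [ap0|apn0].
  apply: allz => i Hi; have := Hmin i Hi; rewrite /= ap0 (proj2 (Hz0 0) erefl).
  by case E: (nu (a i)) => //= _; apply/(proj1 (Hz0 _)).
pose g i := f i - (a i / a p) *: f p.
have Hs' : forall i, i \in s -> forall c', c' \notin C :\ c -> g i ord0 c' = 0.
  move=> i Hi c'; rewrite !inE negb_and negbK => /orP [/eqP ->|Hc'].
    by rewrite /g !mxE -/(a i) -/(a p) divfK // subrr.
  by rewrite /g !mxE Hs // Hs // mulr0 subr0.
have [T [H1 H2 H3]] := IH (C :\ c) g s HC' Hs'.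
exists (p :: T); split => //.
  by move=> t; rewrite inE => /orP [/eqP ->|/H2].
move=> i Hi.
have [ds [Hd1 Hd2]] := H3 i Hi.
have HY : forall y, y \in map g T -> exists ds, ocomb le nu (fun v => v \in map f (p :: T)) ds /\ sumv ds = y.
  move=> y /mapP [t Ht ->].
  exists [:: (1, f t); (- (a t / a p), f p)]; split.
    move=> pr Hpr; have : (pr == (1, f t)) || (pr == (- (a t / a p), f p)) by move: Hpr; rewrite !inE.
    case/orP => /eqP -> /=; split.
    - exact: vr1.
    - by rewrite inE map_f ?orbT.
    - apply: (vrN Hv); apply: (vr_div Hv) => //; exact: Hmin (H2 t Ht).
    - exact: mem_head.
  by rewrite !sumv_cons sumv_nil /= addr0 scale1r scaleNr.
have [es [He1 He2]] := subst_lin Hv HY Hd1.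
exists ((a i / a p, f p) :: es); split.
  move=> pr Hpr; have : (pr == (a i / a p, f p)) || (pr \in es) by move: Hpr; rewrite inE.
  case/orP => [/eqP -> /=|/He1 //]; split.
    apply: (vr_div Hv) => //; exact: Hmin i Hi.
  exact: mem_head.
by rewrite sumv_cons He2 Hd2 /g /= addrC subrK.
Qed.

Local Open Scope fset_scope.

Lemma pad (T : choiceType) (X S : {fset T}) (k : nat) :
  S `<=` X -> (#|` S| + k <= #|` X|)%N ->
  exists S' : {fset T}, [/\ S `<=` S', S' `<=` X & #|` S'| = (#|` S| + k)%N].
Proof.
elim: k S => [|k IH] S HS Hk.
  by exists S; split => //; rewrite addn0.
have : ~~ (X `<=` S).
  apply/negP => HXS; have := fsubset_leq_card HXS; move: Hk; rewrite addnS; lia.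
case/fsubsetPn => y yX yS.
have HS' : y |` S `<=` X by rewrite fsubUset fsub1set yX HS.
have Hk' : (#|` y |` S| + k <= #|` X|)%N.
  by rewrite cardfsU1 yS add1n addSn -addnS.
have [S' [H1 H2 H3]] := IH (y |` S) HS' Hk'.
exists S'; split => //.
  exact: fsubset_trans (fsubsetUr _ _) H1.
by rewrite H3 cardfsU1 yS add1n addSn addnS.
Qed.

Lemma sumc_vr (K : fieldType) (G : zmodType) le nu (V : lmodType K) (S : V -> Prop) cs :
  is_valuation le nu -> @ocomb K G le nu V S cs -> val_ring le nu (sumc cs).
Proof.
move=> Hv; elim: cs => [|pr cs IH] H; first by rewrite sumc_nil; exact: vr0.
rewrite sumc_cons; apply: vrD => //; first by case: (H pr (mem_head _ _)).
by apply: IH => q Hq; apply: H; rewrite inE Hq orbT.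
Qed.

Definition shft (K : fieldType) (V : lmodType K) (x0 : V) (cs : seq (K * V)) :=
  [seq (pr.1, (pr.2 + x0)%R) | pr <- cs].

Lemma sumv_shft (K : fieldType) (V : lmodType K) x0 (cs : seq (K * V)) :
  sumv (shft x0 cs) = (sumv cs + sumc cs *: x0)%R.
Proof.
rewrite /sumv /sumc /shft big_map scaler_suml -big_split /=.
by apply: eq_bigr => pr _; rewrite scalerDr.
Qed.

Lemma sumc_shft (K : fieldType) (V : lmodType K) x0 (cs : seq (K * V)) :
  sumc (shft x0 cs) = sumc cs.
Proof. by rewrite /sumc /shft big_map. Qed.

Lemma aff_pick (K : fieldType) (G : zmodType) (le : rel G) (nu : K -> option G)
  (d : nat) (X : {fset 'rV[K]_d}) (x0 : 'rV[K]_d) :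
  is_valuation le nu -> x0 \in X ->
  exists S : {fset 'rV[K]_d}, [/\ S `<=` X, (#|` S| <= d.+1)%N &
    forall x, x \in X -> exists ds, ocomb le nu (fun v => v \in S) ds /\ sumv ds = x /\ sumc ds = 1%R].
Proof.
move=> Hv x0X.
have HC : (#|[set: 'I_d]| <= d)%N by rewrite cardsT card_ord.
have Hs : forall i, i \in enum_fset X -> forall c, c \notin [set: 'I_d] ->
    ((fun x => x - x0) i ord0 c = 0)%R by move=> i _ c; rewrite inE.
have [T [H1 H2 H3]] := core Hv HC Hs.
exists (x0 |` [fset x in T]); split.
- rewrite fsubUset fsub1set x0X /=; apply/fsubsetP => x; rewrite inE => /H2; done.
- rewrite cardfsU1 card_fseq; apply: (leq_trans (leq_add (leq_b1 _) (size_undup T))).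
  by rewrite add1n ltnS.
move=> x xX.
have [ds [Hd1 Hd2]] := H3 x xX.
exists ((1 - sumc ds, x0)%R :: shft x0 ds); split; [|split].
- move=> pr Hpr; have : (pr == (1 - sumc ds, x0)%R) || (pr \in shft x0 ds) by move: Hpr; rewrite inE.
  case/orP => [/eqP -> /=|/mapP [q Hq ->] /=]; split.
  + apply: vrD => //; first exact: vr1. apply: vrN => //; exact: sumc_vr Hd1.
  + exact: fsetU11.
  + by case: (Hd1 q Hq).
  + case: (Hd1 q Hq) => _ /mapP [t Ht ->]; rewrite /= subrK.
    by apply/fsetUP; right; rewrite inE.
- by rewrite sumv_cons sumv_shft Hd2 /= scalerBl scale1r addrACA addNr addr0 addrC subrK.
- by rewrite sumc_cons sumc_shft /= subrK.
Qed.

Lemma aff_vconv (K : fieldType) (G : zmodType) (le : rel G) (nu : K -> option G)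
  (d : nat) (S : 'rV[K]_d -> Prop) ds :
  ocomb le nu S ds -> sumc ds = 1%R -> vconv le nu S (sumv ds).
Proof.
move=> Hd Hc.
have n0 : (0 < size ds)%N.
  by case: ds Hd Hc => //; rewrite sumc_nil => _ /eqP; rewrite eq_sym oner_eq0.
exists (size ds), (fun i => (nth (0, 0)%R ds i).2), (fun i => (nth (0, 0)%R ds i).1).
split => //.
- by move=> i; case: (Hd (nth (0,0)%R ds i)) => //; apply: mem_nth.
- by move=> i; case: (Hd (nth (0,0)%R ds i)) => //; apply: mem_nth.
- by rewrite -Hc /sumc (big_nth (0,0)%R) big_mkord.
- by rewrite /sumv (big_nth (0,0)%R) big_mkord.
Qed.

Lemma vconv_aff (K : fieldType) (G : zmodType) (le : rel G) (nu : K -> option G)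
  (d : nat) (S : 'rV[K]_d -> Prop) p :
  vconv le nu S p -> exists ds, ocomb le nu S ds /\ sumv ds = p /\ sumc ds = 1%R.
Proof.
case=> n [y [alpha [n0 Hy Ha Hs ->]]].
exists [seq (alpha i, y i) | i <- enum 'I_n]; split; [|split].
- by move=> pr /mapP [i _ ->]; split; [exact: Ha|exact: Hy].
- by rewrite /sumv big_map big_enum.
- by rewrite /sumc big_map big_enum.
Qed.

Definition aff (K : fieldType) (G : zmodType) (le : rel G) (nu : K -> option G)
  (d : nat) (S : {fset 'rV[K]_d}) (x : 'rV[K]_d) :=
  exists ds, ocomb le nu (fun v => v \in S) ds /\ sumv ds = x /\ sumc ds = 1%R.

Lemma build (K : fieldType) (G : zmodType) (le : rel G) (nu : K -> option G)
  (d : nat) (r : nat) :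
  is_valuation le nu -> forall X : {fset 'rV[K]_d}, (d.+1 * r + 1 <= #|` X|)%N ->
  exists Xs : nat -> {fset 'rV[K]_d},
  [/\ (forall x, x \in X <-> exists i, (i <= r)%N /\ x \in Xs i),
      (forall i j, (i <= r)%N -> (j <= r)%N -> i != j -> Xs i `&` Xs j = fset0),
      (forall i, (i < r)%N -> #|` Xs i| = d.+1),
      #|` Xs r| = (#|` X| - d.+1 * r)%N
    & (forall i j, (i <= j)%N -> (j <= r)%N -> forall x, x \in Xs j -> aff le nu (Xs i) x)
      /\ Xs r != fset0].
Proof.
move=> Hv; elim: r => [|r IH] X HX.
  exists (fun _ => X); split.
  - move=> x; split; [by move=> H; exists 0%N|by case=> i []].
  - by move=> [|i] [|j].
  - by [].
  - by rewrite muln0 subn0.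
  split; last by rewrite -cardfs_eq0; move: HX; rewrite muln0; case: (#|` X|).
  move=> i j _ _ x xX; exists [:: (1%R, x)]; split; [|split].
  + move=> pr; rewrite inE => /eqP -> /=; split => //; exact: vr1.
  + by rewrite sumv_cons sumv_nil scale1r addr0.
  + by rewrite sumc_cons sumc_nil addr0.
have X0 : X != fset0 by rewrite -cardfs_eq0; move: HX; case: (#|` X|); lia.
case/fset0Pn: X0 => x0 x0X.
have [S0 [HS01 HS02 HS03]] := aff_pick Hv x0X.
have Hk : (#|` S0| + (d.+1 - #|` S0|) <= #|` X|)%N by move: HX HS02; lia.
have [S [HS1 HS2 HS3]] := pad HS01 Hk.
have HS3' : #|` S| = d.+1 by rewrite HS3; move: HS02; lia.
have affS : forall x, x \in X -> aff le nu S x.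
  move=> x /HS03 [ds [H1 H2]]; exists ds; split => //.
  by apply: ocomb_mono H1 => v /(fsubsetP HS1).
have HX' : (d.+1 * r + 1 <= #|` X `\` S|)%N by rewrite cardfsDS // HS3'; move: HX; lia.
have [Xs' [Ha Hb Hc Hd [He Hf]]] := IH _ HX'.
have sub' : forall i x, (i <= r)%N -> x \in Xs' i -> x \in X `\` S.
  by move=> i x Hi Hx; apply/Ha; exists i.
exists (fun i => if i is i'.+1 then Xs' i' else S); split.
- move=> x; split.
    move=> xX; case: (boolP (x \in S)) => xS; first by exists 0%N.
    have : x \in X `\` S by rewrite inE xS xX.
    by case/Ha => i [Hi Hx]; exists i.+1.
  case=> [[|i]] [Hi Hx]; first exact: (fsubsetP HS2).
  by have := sub' i x Hi Hx; rewrite inE => /andP [].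
- move=> [|i] [|j] //= Hi Hj Hij.
  + apply/fsetP => x; rewrite !inE; apply/negP => /andP [xS /(sub' j x Hj)].
    by rewrite inE xS.
  + apply/fsetP => x; rewrite !inE; apply/negP => /andP [/(sub' i x Hi)].
    by rewrite inE => /andP [/negP].
  + exact: Hb.
- by move=> [|i] //= Hi; apply: Hc.
- by rewrite Hd cardfsDS // HS3' mulnS subnDA.
split => //.
move=> [|i] [|j] //= Hij Hj x Hx.
- by apply: affS; apply: (fsubsetP HS2).
- by apply: affS; have := sub' j x Hj Hx; rewrite inE => /andP [].
- exact: (He i j Hij Hj x Hx).
Qed.

Theorem theorem4p15 (K : fieldType) (G : zmodType) (le : rel G)
    (nu : K -> option G) (d r : nat) (X : {fset 'rV[K]_d}) :
  is_valuation le nu -> (1 <= d)%N -> (1 <= r)%N ->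
  ((d.+1) * (r - 1) + 1 <= #|` X|)%N ->
  exists Xs : 'I_r -> {fset 'rV[K]_d},
    [/\ (forall x, x \in X <-> exists i, x \in Xs i),
        (forall i j, i != j -> Xs i `&` Xs j = fset0),
        (forall i : 'I_r, (i < r.-1)%N -> #|` Xs i| = d.+1),
        (forall i : 'I_r, nat_of_ord i = r.-1 -> #|` Xs i| = (#|` X| - d.+1 * (r - 1))%N)
      & ((forall i j : 'I_r, (i <= j)%N -> forall p,
            vconv le nu (fun q => q \in Xs j) p -> vconv le nu (fun q => q \in Xs i) p)
      /\ (forall i : 'I_r, nat_of_ord i = r.-1 ->
            Xs i != fset0 /\
            forall x, x \in Xs i -> forall k : 'I_r, vconv le nu (fun q => q \in Xs k) x))].
Proof.
move=> Hv _; case: r => [|r] // _; rewrite subSS subn0 /= => HX.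
have [Xs [Ha Hb Hc Hd [He Hf]]] := build Hv HX.
have toaff : forall (i j : 'I_r.+1), (i <= j)%N -> forall x, x \in Xs j ->
    exists ds, ocomb le nu (fun q => q \in Xs i) ds /\ sumv ds = x /\ sumc ds = 1%R.
  move=> i j Hij x Hx; exact: (He i j Hij (ltn_ord j : (j <= r)%N) x Hx).
exists (fun i => Xs i); split.
- move=> x; split.
    by case/Ha => i [Hi Hx]; exists (Ordinal (Hi : (i < r.+1)%N)).
  by case=> i Hx; apply/Ha; exists i; split => //; exact: (ltn_ord i).
- move=> i j Hij; apply: Hb; [exact: (ltn_ord i)|exact: (ltn_ord j)|exact: Hij].
- by move=> i Hi; apply: Hc.
- by move=> i /= ->.
split.
- move=> i j Hij p /vconv_aff [ds [Hd1 [Hd2 Hd3]]].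
  have [es [He1 [He2 He3]]] := subst_aff Hv (toaff i j Hij) Hd1.
  by rewrite -Hd2 -He2; apply: aff_vconv => //; rewrite He3.
- move=> i /= Hi; rewrite Hi; split => // x Hx k.
  have [ds [H1 [H2 H3]]] := He k r (ltn_ord k : (k <= r)%N) (leqnn r) x Hx.
  by rewrite -H2; apply: aff_vconv.
Qed.
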